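(* Let $R$ be a multirectangle in $\mathbb{R}^d$. For each $1\le i\le d$ let $F_i\subseteq(0,\infty)$ be a $\mathbb{Q}$-linearly independent set. Let $\mathcal{P}$ and $\mathcal{P}'$ be two finite partitions of $R$ into rectangles such that $\lambda(\operatorname{pr}_i(K))\in F_i$ for every $K\in\mathcal{P}\cup\mathcal{P}'$ and every $i$. Then there exists a bijection $\delta:\mathcal{P}\to\mathcal{P}'$ such that for every $K\in\mathcal{P}$ the rectangle $\delta(K)$ is a translate of $K$; moreover $\delta$ can be chosen with $\delta(K)=K$ for every $K\in\mathcal{P}\cap\mathcal{P}'$.
   Context: A rectangle in $\mathbb{R}^d$ is a set $\prod_{i=1}^d[a_i,b_i)$ with $a_i<b_i$ real; a multirectangle is a finite union of rectangles. $\operatorname{pr}_i$ is the projection onto the $i$-th coordinate and $\lambda$ is Lebesgue measure on $\mathbb{R}$. *)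

(* Defs.v *)
From HB Require Import structures.
From mathcomp Require Import all_boot all_order all_algebra.
From mathcomp Require Import all_classical all_reals all_analysis.
Set Implicit Arguments. Unset Strict Implicit. Unset Printing Implicit Defensive.
Import Order.TTheory GRing.Theory Num.Theory.
Local Open Scope classical_set_scope.
Local Open Scope ring_scope.

Definition box {R : realType} {d : nat} (a b : 'I_d -> R) : set ('I_d -> R) :=
  [set x | forall i, a i <= x i < b i].

Definition is_rectangle {R : realType} {d : nat} (K : set ('I_d -> R)) : Prop :=
  exists a b : 'I_d -> R, (forall i, a i < b i) /\ K = box a b.

Definition is_multirectangle {R : realType} {d : nat} (M : set ('I_d -> R)) : Prop :=
  exists (n : nat) (K : 'I_n -> set ('I_d -> R)),
    (forall k, is_rectangle (K k)) /\ M = \bigcup_(k in [set: 'I_n]) K k.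

Definition rect_partition {R : realType} {d : nat}
    (M : set ('I_d -> R)) (P : set (set ('I_d -> R))) : Prop :=
  [/\ finite_set P, (forall K, P K -> is_rectangle K),
      trivIset P id & \bigcup_(K in P) K = M].

Definition pr {R : realType} {d : nat} (i : 'I_d) (K : set ('I_d -> R)) : set R :=
  (fun x => x i) @` K.

Definition Q_lin_indep {R : realType} (F : set R) : Prop :=
  forall (s : seq R) (c : R -> rat), uniq s -> (forall x, x \in s -> F x) ->
    \sum_(x <- s) ratr (c x) * x = 0 -> forall x, x \in s -> c x = 0.

Definition translate {R : realType} {d : nat} (K : set ('I_d -> R)) (v : 'I_d -> R)
  : set ('I_d -> R) := [set (fun i => x i + v i) | x in K].

(* Main.v *)
Require Import Defs.
From HB Require Import structures.
From mathcomp Require Import all_boot all_order all_algebra.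
From mathcomp Require Import all_classical all_reals all_analysis.
From mathcomp Require Import ring lra.
Import Order.TTheory GRing.Theory Num.Theory.
Set Implicit Arguments. Unset Strict Implicit. Unset Printing Implicit Defensive.

Lemma shape_bij (T U : eqType) (f : T -> U) (s s' : seq T) :
  uniq s -> uniq s' ->
  (forall u, count (fun x => f x == u) s = count (fun x => f x == u) s') ->
  exists g : T -> T,
    [/\ forall x, x \in s -> g x \in s', {in s &, injective g},
        (forall y, y \in s' -> exists2 x, x \in s & g x = y) &
        forall x, x \in s -> f (g x) = f x].
Proof.
elim: s s' => [|x s IH] s' us us' hc.
  exists id; split => //.
  move=> y ys'; have := hc (f y); rewrite /= => /esym /eqP.
  rewrite -leqn0 leqNgt -has_count => /negP []; by apply/hasP; exists y.
move: us => /andP [xs us].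
have : has (fun z => f z == f x) s'.
  by rewrite has_count -hc /= eqxx.
move=> /hasP [y ys' /eqP fy].
have prm := perm_to_rem ys'.
have us0 : uniq (rem y s') by apply: rem_uniq.
have [g0 [g0m g0i g0s g0f]] : exists g : T -> T,
    [/\ forall x, x \in s -> g x \in rem y s', {in s &, injective g},
        (forall y0, y0 \in rem y s' -> exists2 x, x \in s & g x = y0) &
        forall x, x \in s -> f (g x) = f x].
  apply: IH => // u; have := hc u; rewrite (permP prm) /= fy.
  by move/eqP; rewrite eqn_add2l => /eqP.
have remy : forall z, z \in rem y s' = (z != y) && (z \in s') by move=> z; rewrite (mem_rem_uniq _ us') inE.
exists (fun z => if z == x then y else g0 z); split.
- move=> z; rewrite inE; case: eqP => // _ /= /g0m.
  by rewrite remy => /andP [].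
- move=> z w; rewrite !inE => hz hw.
  case: (eqVneq z x) => [zx|zx] /=; case: (eqVneq w x) => [wx|wx] //=.
  + by rewrite zx wx.
  + move=> wy; move: hw; rewrite (negbTE wx) /= => /g0m; rewrite -wy remy eqxx //.
  + move=> hz'; move: hz; rewrite (negbTE zx) /= => /g0m; rewrite hz' remy eqxx //.
  + by move: hz hw; rewrite (negbTE zx) (negbTE wx) /=; apply: g0i.
- move=> y0 y0s'; case: (eqVneq y0 y) => [->|y0y].
    by exists x; rewrite ?inE ?eqxx.
  have [z zs gz] : exists2 z, z \in s & g0 z = y0 by apply: g0s; rewrite remy y0y.
  exists z; first by rewrite inE zs orbT.
  by case: eqP => [zx|//]; move: xs; rewrite -zx zs.
- move=> z; rewrite inE; case: eqP => [->|_] //= /g0f //.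
Qed.

Local Open Scope classical_set_scope.
Local Open Scope ring_scope.

Section OneD.
Variable R : realType.

Lemma seq_max (s : seq (R * R)) : s != [::] ->
  exists m, (exists2 pw, pw \in s & pw.1 = m) /\ forall pw, pw \in s -> pw.1 <= m.
Proof.
elim: s => // pw s IH _.
case: (eqVneq s [::]) => [->|/IH [m [[q qs qm] hm]]].
  by exists pw.1; split; [exists pw; rewrite ?mem_head|move=> q; rewrite inE => /eqP->].
exists (Num.max pw.1 m); split.
  case: (leP pw.1 m) => _; first by exists q; rewrite // inE qs orbT.
  by exists pw; rewrite ?mem_head.
move=> q'; rewrite inE => /orP [/eqP->|/hm]; first by rewrite le_max lexx.
by move=> h; rewrite le_max h orbT.
Qed.

Lemma pointsE (s : seq (R * R)) :
  (forall y, \sum_(pw <- s) pw.2 * (pw.1 <= y)%R%:R = 0) ->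
  \sum_(pw <- s) pw.2 * pw.1 = 0.
Proof.
move: {2}(size s) (leqnn (size s)) => n; elim: n s => [|n IH] s.
  by rewrite leqn0 => /nilP -> _; rewrite big_nil.
move=> hs H.
case: (eqVneq s [::]) => [->|sn0]; first by rewrite big_nil.
have [m [[q qs qm] hm]] := seq_max sn0.
pose p := fun pw : R * R => pw.1 < m.
have [y0 [y0m hy0]] : exists y0, y0 < m /\ forall pw, pw \in s -> p pw -> pw.1 <= y0.
  case: (eqVneq (seq.filter p s) [::]) => [f0|fn0].
    exists (m - 1); split; first by rewrite ltrBlDr ltrDl.
    by move=> pw pws ppw; have := mem_filter p pw s; rewrite f0 in_nil pws ppw.
  have [m' [[q' q's q'm] hm']] := seq_max fn0.
  exists m'; split.
    by move: q's; rewrite mem_filter => /andP [+ _]; rewrite /p q'm.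
  by move=> pw pws ppw; apply: hm'; rewrite mem_filter ppw pws.
have Hsplit : forall g : R * R -> R,
  \sum_(pw <- s) g pw = \sum_(pw <- s | p pw) g pw + \sum_(pw <- s | ~~ p pw) g pw.
  by move=> g; rewrite (bigID p).
have eqm : forall pw, pw \in s -> ~~ p pw -> pw.1 = m.
  by move=> pw pws; rewrite /p -leNgt => h; apply/eqP; rewrite eq_le hm.
have Hm : \sum_(pw <- s) pw.2 = 0.
  rewrite -[RHS](H m) big_seq [RHS]big_seq; apply: eq_bigr => pw pws; by rewrite hm // mulr1.
have Hy0 : \sum_(pw <- s | p pw) pw.2 = 0.
  rewrite -[RHS](H y0) Hsplit.
  have -> : \sum_(pw <- s | ~~ p pw) pw.2 * (pw.1 <= y0)%R%:R = 0.
    rewrite big_seq_cond big1 // => pw /andP [pws npw]; by rewrite eqm // leNgt y0m mulr0.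
  rewrite addr0 big_seq_cond [RHS]big_seq_cond; apply: eq_bigr => pw /andP[pws ppw].
  by rewrite hy0 // mulr1.
have Hnp : \sum_(pw <- s | ~~ p pw) pw.2 = 0.
  by move: Hm; rewrite Hsplit Hy0 add0r.
rewrite Hsplit.
have -> : \sum_(pw <- s | ~~ p pw) pw.2 * pw.1 = 0.
  rewrite big_seq_cond (eq_bigr (fun pw => pw.2 * m)); last first.
    by move=> pw /andP [pws npw]; rewrite eqm.
  by rewrite -big_seq_cond -mulr_suml Hnp mul0r.
rewrite addr0 -big_filter; apply: IH.
  rewrite size_filter -ltnS; apply: leq_trans hs; rewrite -(count_predC p s) -[X in (X < _)%N]addn0 ltn_add2l.
  rewrite -has_count; apply/hasP; exists q => //=; rewrite /p qm ltxx //.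
move=> y; rewrite big_filter -[RHS](H y) Hsplit.
suff -> : \sum_(pw <- s | ~~ p pw) pw.2 * (pw.1 <= y)%R%:R = 0 by rewrite addr0.
case: (leP m y) => my.
  rewrite big_seq_cond (eq_bigr (fun pw => pw.2)) -?big_seq_cond //.
  by move=> pw' /andP [pws' npw']; rewrite eqm // my mulr1.
rewrite big_seq_cond big1 // => pw /andP [pws npw].
by rewrite eqm // leNgt my mulr0.
Qed.

Lemma lengths_sum (T : eqType) (r : seq T) (c : T -> R) (a b : T -> R) :
  (forall e, e \in r -> a e < b e) ->
  (forall y, \sum_(e <- r) c e * (a e <= y < b e)%R%:R = 0) ->
  \sum_(e <- r) c e * (b e - a e) = 0.
Proof.
move=> hab H.
have := @pointsE ([seq (a e, c e) | e <- r] ++ [seq (b e, - c e) | e <- r]).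
rewrite big_cat !big_map /= => h.
have {h} : \sum_(j <- r) c j * a j + \sum_(j <- r) - c j * b j = 0.
  apply: h => y; rewrite big_cat !big_map /= -big_split /= -[RHS](H y).
  rewrite big_seq [RHS]big_seq; apply: eq_bigr => e er.
  have := hab e er.
  by case: (leP (a e) y) => ay; case: (ltP y (b e)) => yb //= hlt; rewrite ?mulr1 ?mulr0 ?addr0 ?add0r; lra.
move=> h; transitivity (- (\sum_(j <- r) c j * a j + \sum_(j <- r) - c j * b j)); last by rewrite h oppr0.
rewrite opprD -!sumrN -big_split /=; apply: eq_bigr => e _; ring.
Qed.

Lemma oneD (T : eqType) (F : set R) (r : seq T) (c : T -> int) (a b : T -> R) :
  Q_lin_indep F -> (forall e, e \in r -> a e < b e) ->
  (forall e, e \in r -> F (b e - a e)) ->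
  (forall y, \sum_(e <- r) ((c e)%:~R : R) * (a e <= y < b e)%R%:R = 0) ->
  forall t, \sum_(e <- r | b e - a e == t) c e = 0.
Proof.
move=> QF hab hF H t.
have h0 := lengths_sum (c:=fun e => (c e)%:~R) hab H.
pose s := undup [seq b e - a e | e <- r].
have ins : forall e, e \in r -> b e - a e \in s.
  by move=> e er; rewrite mem_undup; apply/mapP; exists e.
pose cf := fun f => \sum_(e <- r | b e - a e == f) c e.
have hs : \sum_(f <- s) ratr ((cf f)%:~R) * f = 0.
  rewrite -[RHS]h0.
  have -> : \sum_(e <- r) (c e)%:~R * (b e - a e) =
     \sum_(e <- r) \sum_(f <- s) (b e - a e == f)%:R * ((c e)%:~R * f).
    rewrite big_seq [RHS]big_seq; apply: eq_bigr => e er.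
    rewrite (bigD1_seq (b e - a e)) ?undup_uniq ?ins //= eqxx mul1r big1 ?addr0 //.
    by move=> f /negbTE; rewrite eq_sym => ->; rewrite mul0r.
  rewrite exchange_big; apply: eq_bigr => f _.
  rewrite ratr_int /cf rmorph_sum /= mulr_suml big_mkcond /=; apply: eq_bigr => e _.
  by case: eqP; rewrite ?mul1r ?mul0r.
have all0 := QF s (fun f => (cf f)%:~R) (undup_uniq _) _ hs.
case st: (t \in s).
  apply/eqP; rewrite -(intr_eq0 rat) -/(cf t) all0 //.
  by move=> x; rewrite mem_undup => /mapP [e er ->]; apply: hF.
rewrite big_seq_cond big1 // => e /andP [er /eqP et].
by move: st; rewrite -et ins.
Qed.

Lemma keyJ (d : nat) (F : 'I_d -> set R) (T : eqType) (a b : T -> 'I_d -> R)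
  (QF : forall i, Q_lin_indep (F i)) (J : seq 'I_d) :
  uniq J ->
  forall (r : seq T), (forall e, e \in r -> forall i, a e i < b e i /\ F i (b e i - a e i)) ->
  forall (c : T -> int),
  (forall x : 'I_d -> R, \sum_(e <- r) ((c e)%:~R : R) *
      \prod_(i <- J) (a e i <= x i < b e i)%R%:R = 0) ->
  forall t : 'I_d -> R, \sum_(e <- r | all (fun i => b e i - a e i == t i) J) c e = 0.
Proof.
elim: J => [|j J IH] /= uJ r hr c H t.
  move: (H (fun=> 0)); under eq_bigr do rewrite big_nil mulr1.
  by move=> h; apply/eqP; rewrite -(intr_eq0 R) rmorph_sum /=; apply/eqP.
move: uJ => /andP [jJ uJ].
have H1 : forall y, \sum_(e <- r | all (fun i => b e i - a e i == t i) J)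
    (if (a e j <= y < b e j) then c e else 0) = 0.
  move=> y; apply: (IH uJ r hr) => x.
  rewrite -[RHS](H (fun i => if i == j then y else x i)); apply: eq_bigr => e _.
  rewrite big_cons /= eqxx.
  have -> : \prod_(i <- J) (a e i <= (if i == j then y else x i) < b e i)%R%:R =
            \prod_(i <- J) ((a e i <= x i < b e i)%R%:R : R).
    rewrite big_seq [RHS]big_seq; apply: eq_bigr => i iJ.
    by case: eqP => // ij; move: jJ; rewrite -ij iJ.
  by case: ifP => _; rewrite ?mul1r ?mul0r ?mulr0.
have h : \sum_(e <- seq.filter (fun e => all (fun i => b e i - a e i == t i) J) r |
     b e j - a e j == t j) c e = 0.
  apply: (@oneD T (F j) _ c (fun e => a e j) (fun e => b e j) (QF j)).
  - by move=> e; rewrite mem_filter => /andP [_ /hr] /(_ j) [].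
  - by move=> e; rewrite mem_filter => /andP [_ /hr] /(_ j) [].
  move=> y; rewrite big_filter; move/eqP: (H1 y); rewrite -(intr_eq0 R) rmorph_sum /= => /eqP h; rewrite -[RHS]h.
  by apply: eq_bigr => e _; case: ifP => _; rewrite ?mulr1 ?mulr0.
move: h; rewrite big_filter_cond => h; rewrite -[RHS]h; apply: eq_bigl => e /=; by rewrite andbC.
Qed.
End OneD.

Section Geo.
Variable R : realType.

Lemma pr_box d (a b : 'I_d -> R) i : (forall j, a j < b j) ->
  pr i (box a b) = [set` `[a i, b i[%R].
Proof.
move=> hab; apply/seteqP; split => y /=.
  by case=> x hx <-; rewrite in_itv /=; exact: hx i.
rewrite in_itv /= => hy; exists (fun j => if j == i then y else a j) => /=; last by rewrite eqxx.
by move=> j; case: eqP => [->|_] //; rewrite lexx hab.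
Qed.

Lemma measure_pr d (a b : 'I_d -> R) i : (forall j, a j < b j) ->
  lebesgue_measure (pr i (box a b)) = (b i - a i)%:E.
Proof.
move=> hab; rewrite pr_box // lebesgue_measure_itv /= lte_fin hab.
by rewrite EFinD.
Qed.

Lemma translate_box d (a b v : 'I_d -> R) :
  translate (box a b) v = box (fun i => a i + v i) (fun i => b i + v i).
Proof.
apply/seteqP; split => x /=.
  by case=> z hz <- i /=; rewrite lerD2r ltrD2r; exact: hz i.
move=> hx; exists (fun i => x i - v i).
  by move=> i; have := hx i; rewrite lerBrDr ltrBlDr.
by apply/funext => i; rewrite subrK.
Qed.

Lemma prod_all d (J : seq 'I_d) (P : pred 'I_d) :
  \prod_(i <- J) ((P i)%:R : R) = (all P J)%:R.
Proof.
elim: J => [|j J IH]; first by rewrite big_nil.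
by rewrite big_cons IH /=; case: (P j); rewrite ?mul1r ?mul0r.
Qed.

Lemma all_enumP d (P : pred 'I_d) : all P (enum 'I_d) <-> forall i, P i.
Proof.
split => [/allP h i|h]; first by apply: h; rewrite mem_enum.
by apply/allP => i _.
Qed.

Lemma part_sum d (M : set ('I_d -> R)) (P : set (set ('I_d -> R))) (s : seq (set ('I_d -> R)))
  (fa fb : set ('I_d -> R) -> 'I_d -> R) :
  rect_partition M P -> P = [set` s] -> (uniq s) ->
  (forall K, P K -> K = box (fa K) (fb K)) ->
  forall x, \sum_(K <- s) ((all (fun i => fa K i <= x i < fb K i) (enum 'I_d))%:R : R)
     = (`[< M x >])%:R.
Proof.
move=> [_ _ triv cup] Ps us hK x.
have memK : forall K, K \in s -> all (fun i => fa K i <= x i < fb K i) (enum 'I_d) = `[< K x >].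
  move=> K Ks; have hKb : K = box (fa K) (fb K) by apply: hK; rewrite Ps.
  apply/idP/idP => [/all_enumP h | /asboolP h].
    by apply/asboolP; rewrite hKb; exact: h.
  by apply/all_enumP; move: h; rewrite {1}hKb.
case: (pselect (M x)) => Mx.
  have -> : `[< M x >] = true by apply/asboolP.
  have : (\bigcup_(K in P) K) x by rewrite cup.
  case=> K0 PK0 K0x.
  have K0s : K0 \in s by move: PK0; rewrite Ps.
  rewrite (bigD1_seq K0) //= memK // (_ : `[< K0 x >] = true); last by apply/asboolP.
  rewrite big1_seq ?addr0 //.
  move=> K /andP [KK0 Ks]; rewrite memK //; case: asboolP => // Kx.
  exfalso; move/eqP: KK0; apply; apply: triv; rewrite ?Ps //.
  by exists x.
rewrite asboolF // big1_seq // => K /andP [_ Ks]; rewrite memK //; case: asboolP => // Kx.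
by exfalso; apply: Mx; rewrite -cup; exists K => //; rewrite Ps.
Qed.

End Geo.

Lemma sum_count_int (T : Type) (s : seq T) (p : pred T) :
  \sum_(x <- s | p x) (1 : int) = (count p s)%:Z.
Proof.
elim: s => [|x s IH]; first by rewrite big_nil.
by rewrite big_cons IH /=; case: (p x) => //=; rewrite PoszD addrC.
Qed.

Lemma undup_set (T : eqType) (P : set T) (s : seq T) : P = [set` s] -> P = [set` undup s].
Proof. by move=> ->; apply/seteqP; split => K /=; rewrite mem_undup. Qed.

Unset Implicit Arguments.

Theorem mainTheorem16 (R : realType) (d : nat) (M : set ('I_d -> R))
  (F : 'I_d -> set R)
  (P P' : set (set ('I_d -> R))) :
  is_multirectangle M ->
  (forall i, (forall r, F i r -> 0 < r) /\ Q_lin_indep (F i)) ->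
  rect_partition M P -> rect_partition M P' ->
  (forall K, (P K \/ P' K) -> forall i,
      exists r, F i r /\ (lebesgue_measure (pr i K) = r%:E)%E) ->
  exists delta : set ('I_d -> R) -> set ('I_d -> R),
    [/\ set_bij P P' delta,
        (forall K, P K -> exists v : 'I_d -> R, delta K = translate K v) &
        (forall K, P K -> P' K -> delta K = K)].
Proof.
move=> _ hF hP hP' hlen.
have [ab hab] : {ab : set ('I_d -> R) -> ('I_d -> R) * ('I_d -> R) & forall K,
   is_rectangle K -> (forall i, (ab K).1 i < (ab K).2 i) /\ K = box (ab K).1 (ab K).2}.
  apply: (@choice _ _ (fun K (ab : ('I_d -> R) * ('I_d -> R)) =>
   is_rectangle K -> (forall i, ab.1 i < ab.2 i) /\ K = box ab.1 ab.2)) => K; case: (pselect (is_rectangle K)) => [[a [b [h1 h2]]]|nK].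
    by exists (a, b).
  by exists (fun=> 0, fun=> 0).
pose fa := fun K => (ab K).1; pose fb := fun K => (ab K).2.
have recP : forall K, P K \/ P' K -> (forall i, fa K i < fb K i) /\ K = box (fa K) (fb K).
  move=> K [PK|PK]; apply: hab; [by case: hP => _ h _ _; apply: h | by case: hP' => _ h _ _; apply: h].
have lenF : forall K, P K \/ P' K -> forall i, F i (fb K i - fa K i).
  move=> K hK i; have [hl hb] := recP K hK; have [r [Fr mr]] := hlen K hK i.
  by move: mr; rewrite {1}hb measure_pr // => /(congr1 fine) /= ->.
have [s0 Ps0] := (@finite_seqP _ P).1 (let: And4 h _ _ _ := hP in h).
have [s0' Ps0'] := (@finite_seqP _ P').1 (let: And4 h _ _ _ := hP' in h).
set sP := undup s0; set sP' := undup s0'.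
have PsP : P = [set` sP] by apply: undup_set.
have PsP' : P' = [set` sP'] by apply: undup_set.
have usP : uniq sP := undup_uniq s0.
have usP' : uniq sP' := undup_uniq s0'.
pose shape := fun K => (fun i => fb K i - fa K i).
have shapeE : forall K t, all (fun i => fb K i - fa K i == t i) (enum 'I_d) = (shape K == t).
  move=> K t; apply/idP/eqP => [/all_enumP h|<-]; last by apply/all_enumP => i.
  by apply/funext => i; apply/eqP; apply: h.
have cnt : forall t, count (fun K => shape K == t) sP = count (fun K => shape K == t) sP'.
  move=> t.
  pose T := (set ('I_d -> R) * bool)%type.
  pose r := [seq (K, true) | K <- sP] ++ [seq (K, false) | K <- sP'] : seq T.
  have hr : forall e, e \in r -> forall i, fa e.1 i < fb e.1 i /\ F i (fb e.1 i - fa e.1 i).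
    move=> e; rewrite mem_cat => /orP [] /mapP [K Ks ->] i /=.
      have hK : P K \/ P' K by left; rewrite PsP.
      by split; [exact: (recP K hK).1 | exact: lenF].
    have hK : P K \/ P' K by right; rewrite PsP'.
    by split; [exact: (recP K hK).1 | exact: lenF].
  have H : forall x : 'I_d -> R, \sum_(e <- r) (((if e.2 then 1 else -1) : int)%:~R : R) *
      \prod_(i <- enum 'I_d) (fa e.1 i <= x i < fb e.1 i)%R%:R = 0.
    move=> x; rewrite big_cat !big_map /=.
    under eq_bigr do rewrite prod_all mul1r.
    under [X in _ + X]eq_bigr do rewrite prod_all mulN1r.
    rewrite sumrN (part_sum hP PsP usP (fun K PK => (recP K (or_introl PK)).2)).
    by rewrite (part_sum hP' PsP' usP' (fun K PK => (recP K (or_intror PK)).2)) subrr.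
  have := @keyJ R d F T (fun e : T => fa e.1) (fun e : T => fb e.1) (fun i => (hF i).2)
     (enum 'I_d) (enum_uniq _) r hr (fun e : T => if e.2 then 1 else -1) H t.
  rewrite big_cat !big_map /=.
  under eq_bigl do rewrite shapeE.
  under [X in _ + X = _]eq_bigl do rewrite shapeE.
  rewrite sumrN !sum_count_int => /eqP; rewrite subr_eq0 eqz_nat => /eqP.
  by [].
pose s1 := seq.filter (predC (fun K => K \in sP')) sP.
pose s1' := seq.filter (predC (fun K => K \in sP)) sP'.
have cnt1 : forall t, count (fun K => shape K == t) s1 = count (fun K => shape K == t) s1'.
  move=> t; have := cnt t.
  rewrite -(permP (permEl (perm_filterC (fun K => K \in sP') sP))).
  rewrite -(permP (permEl (perm_filterC (fun K => K \in sP) sP'))) !count_cat.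
  have hc : perm_eq (seq.filter (fun K => K \in sP') sP) (seq.filter (fun K => K \in sP) sP').
    apply: uniq_perm; rewrite ?filter_uniq // => K; rewrite !mem_filter andbC //.
  by rewrite (permP hc) => /eqP; rewrite eqn_add2l => /eqP.
have [g [gm gi gs gf]] := shape_bij (filter_uniq _ usP) (filter_uniq _ usP') cnt1.
exists (fun K => if K \in sP' then K else g K); split.
- split.
  + move=> K; rewrite PsP PsP' /= => Ks; case: ifP => // nK.
    have : g K \in s1' by apply: gm; rewrite mem_filter /= nK Ks.
    by rewrite mem_filter => /andP [].
  + move=> K1 K2; rewrite !in_setE PsP /= => K1s K2s.
    case: ifP => h1; case: ifP => h2 //.
    * move=> e; have : g K2 \in s1' by apply: gm; rewrite mem_filter /= h2 K2s.
      by rewrite mem_filter -e /= K1s.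
    * move=> e; have : g K1 \in s1' by apply: gm; rewrite mem_filter /= h1 K1s.
      by rewrite mem_filter e /= K2s.
    * by apply: gi; rewrite mem_filter /= ?h1 ?h2 ?K1s ?K2s.
  + move=> K'; rewrite PsP' /= => K's; case: (boolP (K' \in sP)) => K'sP.
      by exists K'; [rewrite PsP | rewrite K's].
    have K's1 : K' \in s1' by rewrite mem_filter /= K'sP K's.
    have [K Ks gK] := gs K' K's1.
    exists K; move: Ks; rewrite mem_filter => /andP [/= nK Ks]; first by rewrite PsP.
    by rewrite (negbTE nK).
- move=> K KP; have Ks : K \in sP by move: KP; rewrite PsP.
  have [_ hb] := recP K (or_introl KP).
  case: ifP => h.
    exists (fun=> 0); rewrite {2}hb translate_box {1}hb; congr box; apply/funext => i /=; by rewrite addr0.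
  have Ks1 : K \in s1 by rewrite mem_filter /= h Ks.
  have gKP' : P' (g K) by rewrite PsP' /=; move: (gm K Ks1); rewrite mem_filter => /andP [].
  have [_ hb'] := recP (g K) (or_intror gKP').
  exists (fun i => fa (g K) i - fa K i).
  rewrite {2}hb translate_box {1}hb'; congr box; apply/funext => i /=.
    by rewrite addrC subrK.
  have := congr1 (fun f => f i) (gf K Ks1); rewrite /shape /=; lra.
- move=> K PK P'K; have : K \in sP' by move: P'K; rewrite PsP'.
  by move=> ->.
Qed.
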